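(* Consider the discrete-time system $x(t+1) = A x(t) + B u(t) + C v(t) + w$ with $A \in \mathbb{R}^{d_x\times d_x}$, $B\in\mathbb{R}^{d_x\times d_u}$, $C \in\mathbb{R}^{d_x\times d_v}$, constant $w\in\mathbb{R}^{d_x}$, control constraint $\mathcal U = \{u\in\mathbb{R}^{d_u}\mid \underline u\leq u\leq\overline u\}$ (with $\underline u \leq \overline u$), disturbance constraint $\mathcal V = \langle c_{\mathcal V}\mid G_{\mathcal V}\rangle$ with $G_{\mathcal V}\in\mathbb{R}^{d_v\times n_{\mathcal V}}$, and state constraint $\mathcal X = \{x\in\mathbb{R}^{d_x}\mid\underline x\leq x\leq\overline x\}$. Let $T\geq 0$ be an integer. Let $G_{\mathcal I} \in \mathbb{R}^{d_x\times n_{\mathcal I}}$, $\alpha \in \mathbb{R}^{d_x}$, $\gamma\in\mathbb{R}^{n_{\mathcal I}}$ with $\gamma \geq 0$, $\Gamma = \mathrm{diag}(\gamma)$, $\mathcal I = \langle \alpha \mid G_{\mathcal I}\Gamma\rangle$. For $t = 0,\ldots,T-1$ let $\beta(t)\in\mathbb{R}^{d_u}$, $\Phi(t)\in\mathbb{R}^{d_u\times n_{\mathcal I}}$, $G_{\mathcal F(t)}\in\mathbb{R}^{d_u\times m_t}$ and $\psi(t)\in\mathbb{R}^{m_t}$ with $\psi(t)\geq 0$. Suppose that for all $t = 0,\ldots,T$ \[ A^t\alpha + \sum_{s=0}^{t-1}A^{t-1-s}\big(B\beta(s) + Cc_{\mathcal V} + w\big) - \Big|A^tG_{\mathcal I}\Gamma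 + \sum_{s=0}^{t-1}A^{t-1-s}B\Phi(s)\Big|\mathbf{1}_{n_{\mathcal I}} - \sum_{s=0}^{t-1}|A^{t-1-s}BG_{\mathcal F(s)}|\psi(s) - \sum_{s=0}^{t-1}|A^{t-1-s}CG_{\mathcal V}|\mathbf{1}_{n_{\mathcal V}} \geq \underline x, \] \[ A^t\alpha + \sum_{s=0}^{t-1}A^{t-1-s}\big(B\beta(s) + Cc_{\mathcal V} + w\big) + \Big|A^tG_{\mathcal I}\Gamma + \sum_{s=0}^{t-1}A^{t-1-s}B\Phi(s)\Big|\mathbf{1}_{n_{\mathcal I}} + \sum_{s=0}^{t-1}|A^{t-1-s}BG_{\mathcal F(s)}|\psi(s) + \sum_{s=0}^{t-1}|A^{t-1-s}CG_{\mathcal V}|\mathbf{1}_{n_{\mathcal V}} \leq \overline x, \] and that for all $t = 0,\ldots,T-1$ \[ \beta(t) - |\Phi(t)|\mathbf{1}_{n_{\mathcal I}} - |G_{\mathcal F(t)}|\psi(t) \geq \underline u, \qquad \beta(t) + |\Phi(t)|\mathbf{1}_{n_{\mathcal I}} + |G_{\mathcal F(t)}|\psi(t) \leq \overline u. \] Then $\mathcal I \subseteq \mathrm{Disc}_{[0,T]}(\mathcal X)$, where $\mathrm{Disc}_{[0,T]}(\mathcal X)$ is the set of $x(0)\in\mathcal X$ for which there exists an input signal with $u(t)\in\mathcal U$ for $t=0,\ldots,T$ such that for every disturbance signal with $v(t)\in\mathcal V$ for $t = 0,\ldots,T$, the resulting trajectory satisfies $x(t)\in\mathcal X$ for all $t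=0,\ldots,T$.
   Context: Vector inequalities are elementwise; $|M|$ is the elementwise absolute value; $\mathbf{1}_n$ is the all-ones vector in $\mathbb{R}^n$. The notation $\langle c \mid G\rangle$ denotes the zonotope $\{c + G\lambda : \lambda \in [-1,1]^n\}$ with center $c$ and generator matrix $G$. $\mathrm{diag}(\gamma)$ is the diagonal matrix with $\gamma$ on its diagonal. *)

(* Defs.v *)
From mathcomp Require Import all_boot all_order all_algebra.
Set Implicit Arguments. Unset Strict Implicit. Unset Printing Implicit Defensive.
Import Order.TTheory GRing.Theory Num.Theory.
Local Open Scope ring_scope.

Section Defs.
Variable R : realFieldType.

Definition vle n (x y : 'cV[R]_n) : Prop := forall i, x i 0 <= y i 0.

Definition mabs m n (M : 'M[R]_(m, n)) : 'M[R]_(m, n) := map_mx (fun a => `|a|) M.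

Definition ones n : 'cV[R]_n := const_mx 1.

Definition in_zonotope d n (c : 'cV[R]_d) (G : 'M[R]_(d, n)) (x : 'cV[R]_d) : Prop :=
  exists lam : 'cV[R]_n, (forall i, -1 <= lam i 0 <= 1) /\ x = c + G *m lam.

Definition in_box d (lo hi x : 'cV[R]_d) : Prop := vle lo x /\ vle x hi.

Fixpoint traj dx du dv (A : 'M[R]_dx) (B : 'M[R]_(dx, du)) (C : 'M[R]_(dx, dv))
  (w : 'cV[R]_dx) (x0 : 'cV[R]_dx) (u : nat -> 'cV[R]_du) (v : nat -> 'cV[R]_dv)
  (t : nat) : 'cV[R]_dx :=
  match t with
  | 0 => x0
  | t'.+1 => A *m traj A B C w x0 u v t' + B *m u t' + C *m v t' + w
  end.

Definition Disc dx du dv nV (A : 'M[R]_dx) (B : 'M[R]_(dx, du)) (C : 'M[R]_(dx, dv))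
  (w : 'cV[R]_dx) (ulo uhi : 'cV[R]_du) (cV : 'cV[R]_dv) (GV : 'M[R]_(dv, nV))
  (xlo xhi : 'cV[R]_dx) (T : nat) (x0 : 'cV[R]_dx) : Prop :=
  in_box xlo xhi x0 /\
  exists u : nat -> 'cV[R]_du,
    (forall t, (t <= T)%N -> in_box ulo uhi (u t)) /\
    forall v : nat -> 'cV[R]_dv,
      (forall t, (t <= T)%N -> in_zonotope cV GV (v t)) ->
      forall t, (t <= T)%N -> in_box xlo xhi (traj A B C w x0 u v t).

End Defs.

(* Main.v *)
Require Import Defs.
From mathcomp Require Import all_boot all_order all_algebra.
From mathcomp Require Import zify ring lra.
Import Order.TTheory GRing.Theory Num.Theory.
Local Open Scope ring_scope.

Lemma traj_sum (R : realFieldType) dx du dv (A : 'M[R]_dx) (B : 'M[R]_(dx, du)) (C : 'M[R]_(dx, dv))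
  (w : 'cV[R]_dx) (x0 : 'cV[R]_dx) (u : nat -> 'cV[R]_du) (v : nat -> 'cV[R]_dv) t :
  traj A B C w x0 u v t = A ^+ t *m x0 +
    \sum_(s < t) A ^+ (t - 1 - s) *m (B *m u s + C *m v s + w).
Proof.
elim: t => [|t IH]; first by rewrite big_ord0 expr0 mul1mx addr0.
rewrite /= IH big_ord_recr /= mulmxDr mulmx_sumr exprS -mulmxE -!mulmxA.
have -> : (t.+1 - 1 - t = 0)%N by lia.
rewrite expr0 mul1mx -!addrA; congr (_ + (_ + _)).
apply: eq_bigr => s _; rewrite mulmxA mulmxE -exprS.
by have -> : (t.+1 - 1 - s = (t - 1 - s).+1)%N by have := ltn_ord s; lia.
Qed.

Lemma norm_mul_le (R : realFieldType) p q (M : 'M[R]_(p, q)) (lam : 'cV[R]_q) i :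
  (forall j, -1 <= lam j 0 <= 1) ->
  `|(M *m lam) i 0| <= (mabs M *m ones R q) i 0.
Proof.
move=> Hl; rewrite !mxE; apply: le_trans (ler_norm_sum _ _ _) _.
apply: ler_sum => j _; rewrite !mxE normrM mulr1 ler_piMr //.
by have /andP[h1 h2] := Hl j; rewrite ler_norml h1 h2.
Qed.

Lemma mabs_ge0 (R : realFieldType) p q (M : 'M[R]_(p, q)) (psi : 'cV[R]_q) i :
  vle 0 psi -> 0 <= (mabs M *m psi) i 0.
Proof.
move=> H; rewrite !mxE; apply: sumr_ge0 => j _; rewrite !mxE mulr_ge0 //.
by have := H j; rewrite mxE.
Qed.

Lemma zmod_id (R : realFieldType) p q (X1 X2 X3 X4 X5 : 'M[R]_(p,q)) :
  X1 + X2 + X3 + X4 = X1 + X5 + X4 + X2 + (X3 - X5).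
Proof. by apply/matrixP => i j; rewrite !mxE; ring. Qed.

Lemma zmod_id2 (R : realFieldType) p q (X1 X2 X3 X4 X5 : 'M[R]_(p,q)) :
  X1 + X2 + (X3 + X4 + X5) = X1 + X3 + (X2 + X4) + X5.
Proof. by apply/matrixP => i j; rewrite !mxE; ring. Qed.

Theorem proposition6p2 (R : realFieldType) (dx du dv nV nI : nat) (T : nat)
  (A : 'M[R]_dx) (B : 'M[R]_(dx, du)) (C : 'M[R]_(dx, dv)) (w : 'cV[R]_dx)
  (ulo uhi : 'cV[R]_du) (cV : 'cV[R]_dv) (GV : 'M[R]_(dv, nV))
  (xlo xhi : 'cV[R]_dx)
  (GI : 'M[R]_(dx, nI)) (alpha : 'cV[R]_dx) (gamma : 'cV[R]_nI)
  (beta : nat -> 'cV[R]_du) (Phi : nat -> 'M[R]_(du, nI))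
  (m : nat -> nat) (GF : forall t : nat, 'M[R]_(du, m t))
  (psi : forall t : nat, 'cV[R]_(m t)) :
  vle ulo uhi ->
  vle 0 gamma ->
  (forall t, (t < T)%N -> vle 0 (psi t)) ->
  (forall t, (t <= T)%N ->
     let ctr := A ^+ t *m alpha
       + \sum_(s < t) A ^+ (t - 1 - s) *m (B *m beta s + C *m cV + w) in
     let rad := mabs (A ^+ t *m GI *m diag_mx gamma^T
                      + \sum_(s < t) A ^+ (t - 1 - s) *m B *m Phi s) *m ones R nI
       + \sum_(s < t) mabs (A ^+ (t - 1 - s) *m B *m GF s) *m psi s
       + \sum_(s < t) mabs (A ^+ (t - 1 - s) *m C *m GV) *m ones R nV in
     vle xlo (ctr - rad) /\ vle (ctr + rad) xhi) ->
  (forall t, (t < T)%N ->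
     let rad := mabs (Phi t) *m ones R nI + mabs (GF t) *m psi t in
     vle ulo (beta t - rad) /\ vle (beta t + rad) uhi) ->
  forall x0 : 'cV[R]_dx,
    in_zonotope alpha (GI *m diag_mx gamma^T) x0 ->
    Disc A B C w ulo uhi cV GV xlo xhi T x0.
Proof.
move=> Hu _ Hpsi HX HU x0 [lam [Hlam ->]].
set u := fun t => if (t < T)%N then beta t + Phi t *m lam else ulo.
have Htraj : forall v : nat -> 'cV[R]_dv,
      (forall t, (t <= T)%N -> in_zonotope cV GV (v t)) ->
      forall t, (t <= T)%N -> in_box xlo xhi (traj A B C w (alpha + GI *m diag_mx gamma^T *m lam) u v t).
  move=> v Hv t Ht.
  have Heq : traj A B C w (alpha + GI *m diag_mx gamma^T *m lam) u v t =
     (A ^+ t *m alpha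
       + \sum_(s < t) A ^+ (t - 1 - s) *m (B *m beta s + C *m cV + w))
     + (A ^+ t *m GI *m diag_mx gamma^T
                      + \sum_(s < t) A ^+ (t - 1 - s) *m B *m Phi s) *m lam
     + \sum_(s < t) A ^+ (t - 1 - s) *m C *m (v s - cV).
    rewrite traj_sum.
    rewrite (eq_bigr (fun s : 'I_t => A ^+ (t - 1 - s) *m (B *m beta s + C *m cV + w)
        + A ^+ (t - 1 - s) *m B *m Phi s *m lam + A ^+ (t - 1 - s) *m C *m (v s - cV))); last first.
      move=> s _; rewrite /u.
      have -> : (s < T)%N by have := ltn_ord s; lia.
      rewrite !mulmxDr !mulmxN !mulmxA; exact: zmod_id.
    rewrite !big_split /= -mulmx_suml mulmxDl !mulmxDr !mulmxA; exact: zmod_id2.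
  have [Hlo Hhi] := HX t Ht.
  move: Hlo Hhi; set ctr := (X in vle _ (X - _)); set rad := (X in vle _ (_ - X)).
  set M := (A ^+ t *m GI *m _ + _).
  move=> Hlo Hhi; rewrite -/ctr -/rad in Hhi.
  have Hb : forall i, `|(M *m lam + \sum_(s < t) A ^+ (t - 1 - s) *m C *m (v s - cV)) i 0| <= rad i 0.
    move=> i; rewrite /rad !mxE.
    apply: le_trans (ler_normD _ _) _.
    rewrite -addrA lerD //; first by have := @norm_mul_le _ _ _ M lam i Hlam; rewrite !mxE.
    rewrite -[X in X <= _]add0r lerD //.
      rewrite summxE; apply: sumr_ge0 => s _; apply: mabs_ge0; apply: Hpsi.
      by have := ltn_ord s; lia.
    rewrite !summxE; apply: le_trans (ler_norm_sum _ _ _) _; apply: ler_sum => s _.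
    have [mu [Hmu ->]] := Hv s (ltnW (leq_trans (ltn_ord s) Ht)).
    rewrite addrC addKr mulmxA; exact: norm_mul_le.
  rewrite Heq -/ctr -addrA; split=> i; move: (Hb i) (Hlo i) (Hhi i); clear Hlo Hhi Hb Heq;
    move: (M *m lam + _) rad ctr => Y r c;
    rewrite !mxE ler_norml => /andP[h1 h2] h3 h4; lra.
split.
  have := Htraj (fun _ => cV) _ 0%N (leq0n T); apply.
  by move=> t _; exists 0; split => [i|]; rewrite ?mxE ?mulmx0 ?addr0 // lerN10 ler01.
exists u; split; last exact: Htraj.
move=> t Ht; rewrite /u; case: ifP => Hlt; last by split => // i; apply: lexx.
have [Hlo Hhi] := HU t Hlt.
have Hb : forall i, `|(Phi t *m lam) i 0| <= (mabs (Phi t) *m ones R nI + mabs (GF t) *m psi t) i 0.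
  move=> i; have h1 := @norm_mul_le _ _ _ (Phi t) lam i Hlam.
  have h2 := @mabs_ge0 _ _ _ (GF t) (psi t) i (Hpsi t Hlt).
  move: h1 h2; move: (mabs (Phi t) *m ones R nI) (mabs (GF t) *m psi t) => P Q.
  rewrite !mxE => h1 h2; lra.
split=> i; move: (Hb i) (Hlo i) (Hhi i); clear Hlo Hhi Hb;
  move: (Phi t *m lam) (mabs (Phi t) *m ones R nI + mabs (GF t) *m psi t) => Y r;
  rewrite !mxE ler_norml => /andP[h1 h2] h3 h4; lra.
Qed.
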